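(* Let $k \geq 3$ and $n > 3k+1$ be integers such that $n$ is $k$-admissible, let $(V,\mathcal{A})$ be a non-reducible partial $k$-star design of order $n$ with at most $u(n,k)$ stars, and let $L$ be the leftover of $(V,\mathcal{A})$. Then (i) at most one vertex of $L$ has degree at most $k$; (ii) if two adjacent vertices of $L$ have degree less than $2k$, then every other vertex of $L$ has degree at least $2k$.
   Context: A $k$-star is a copy of $K_{1,k}$; its vertex of degree $k$ is the centre and the others are leaves. A partial $k$-star design of order $n$ is a pair $(V,\mathcal{A})$ where $V$ is a set of $n$ vertices and $\mathcal{A}$ is a set of edge-disjoint $k$-stars that are subgraphs of the complete graph $K_V$. The leftover of $(V,\mathcal{A})$ is the graph on $V$ whose edges are the edges of $K_V$ lying in no star of $\mathcal{A}$. A positive integer $n$ is $k$-admissible if $\binom{n}{2}\equiv 0 \pmod{k}$. Here \[u(n,k)= \begin{cases} 2 \lfloor \frac{n-2}{k} \rfloor-1 & \text{if $n \not \equiv 1\pmod{k}$},\\ \frac{2(n-1)}{k} - 2 & \text{if $n \equiv 1\pmod{k}$.} \end{cases} \] A partial $k$-star design $(V,\mathcal{A})$ of order $n$ is reducible if $n \equiv 1 \pmod{k}$, $|\mathcal{A}|=u(n,k)$, and there is a vertex which is the centre of at least one star in $\mathcal{A}$ and is not a leaf of any star in $\mathcal{A}$; otherwise it is non-reducible. *)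

(* Defs.v *)
From mathcomp Require Import all_boot.
Set Implicit Arguments. Unset Strict Implicit. Unset Printing Implicit Defensive.

(* Vertices: a finite type T (the vertex set V, with n = #|T|).
   Edges of K_V: 2-element subsets {x,y} of T, represented as [set x; y], x != y.
   A k-star is given by a pair (c, S): centre c, leaf set S with #|S| = k, c \notin S.
   For k >= 2 this pair is determined by the star (as a subgraph). *)

Definition star_edges (T : finType) (s : T * {set T}) : {set {set T}} :=
  [set [set s.1; x] | x in s.2].

Definition is_kstar (T : finType) (k : nat) (s : T * {set T}) : Prop :=
  s.1 \notin s.2 /\ #|s.2| = k.

Definition partial_star_design (T : finType) (k : nat) (A : {set T * {set T}}) : Prop :=
  (forall s, s \in A -> is_kstar k s) /\
  (forall s t, s \in A -> t \in A -> s != t ->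
     [disjoint star_edges s & star_edges t]).

Definition covered (T : finType) (A : {set T * {set T}}) (x y : T) : bool :=
  [exists s in A, [set x; y] \in star_edges s].

Definition leftover_adj (T : finType) (A : {set T * {set T}}) (x y : T) : bool :=
  (x != y) && ~~ covered A x y.

Definition leftover_deg (T : finType) (A : {set T * {set T}}) (x : T) : nat :=
  #|[set y | leftover_adj A x y]|.

Definition k_admissible (n k : nat) : Prop := 'C(n, 2) %% k = 0.

Definition u_bound (n k : nat) : nat :=
  if n %% k == 1 %% k then (2 * (n - 1)) %/ k - 2
  else 2 * ((n - 2) %/ k) - 1.

Definition reducible (T : finType) (k : nat) (A : {set T * {set T}}) : Prop :=
  #|T| %% k = 1 %% k /\ #|A| = u_bound #|T| k /\
  exists v : T, (exists2 s, s \in A & s.1 = v) /\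
                (forall s, s \in A -> v \notin s.2).

(* Main.v *)
Require Import Defs.
From mathcomp Require Import all_boot zify.
Set Implicit Arguments. Unset Strict Implicit.

Lemma cancel_lt k a b : k * a < k * b -> a < b.
Proof. by rewrite ltn_mul2l => /andP[]. Qed.

Lemma arith_i_1 (k M n N cv cw lv lw a b t dv dw : nat) :
  3 <= k -> n = k*M + 1 -> 3*k+1 < n -> N <= 2*M - 2 ->
  n <= 1 + dv + (k*cv + lv) -> dv <= k ->
  n <= 1 + dw + (k*cw + lw) -> dw <= k ->
  lv <= a + t -> lw <= b + t -> a + b <= 1 -> cv + cw + t <= N ->
  [/\ t = 0, N = 2*M-2, 0 < cv & 0 < cw].
Proof.
move=> hk hn hn3 hN hv hdv hw hdw hlv hlw hab hc.
have hM : 3 < M.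
  apply: (@cancel_lt k); lia.
have kN : k * (cv + cw + t) <= k * N by rewrite leq_mul2l hc orbT.
have kU : k * N <= k * (2*M - 2) by rewrite leq_mul2l hN orbT.
rewrite mulnDr mulnDr in kN.
rewrite mulnBr mulnA (mulnC k 2) -mulnA in kU.
case: t hlv hlw hc kN => [|[|e]] hlv hlw hc kN.
- have cv1 : M - 2 < cv by apply: (@cancel_lt k); rewrite mulnBr; lia.
  have cw1 : M - 2 < cw by apply: (@cancel_lt k); rewrite mulnBr; lia.
  split; lia.
- have cv1 : M - 2 < cv by apply: (@cancel_lt k); rewrite mulnBr; lia.
  have cw1 : M - 2 < cw by apply: (@cancel_lt k); rewrite mulnBr; lia.
  lia.
- have he : 3 * e <= k * e by rewrite leq_mul2r hk orbT.
  rewrite -addn2 mulnDr in kN.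
  lia.
Qed.

Lemma arith_i_2 (k q s n N cv cw lv lw a b t dv dw : nat) :
  3 <= k -> n = k*q + s + 2 -> 1 <= s -> s + 2 <= k -> 3*k+1 < n -> N <= 2*q - 1 ->
  n <= 1 + dv + (k*cv + lv) -> dv <= k ->
  n <= 1 + dw + (k*cw + lw) -> dw <= k ->
  lv <= a + t -> lw <= b + t -> a + b <= 1 -> cv + cw + t <= N -> False.
Proof.
move=> hk hn hs hsk hn3 hN hv hdv hw hdw hlv hlw hab hc.
have hq : 2 < q.
  apply: (@cancel_lt k); lia.
have kN : k * (cv + cw + t) <= k * N by rewrite leq_mul2l hc orbT.
have kU : k * N <= k * (2*q - 1) by rewrite leq_mul2l hN orbT.
rewrite mulnDr mulnDr in kN.
rewrite mulnBr mulnA (mulnC k 2) -mulnA in kU.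
case: t hlv hlw hc kN => [|e] hlv hlw hc kN.
- have cv1 : q - 1 < cv by apply: (@cancel_lt k); rewrite mulnBr; lia.
  have cw1 : q - 1 < cw by apply: (@cancel_lt k); rewrite mulnBr; lia.
  lia.
- have he : 2 * e <= k * e by rewrite leq_mul2r (leq_trans _ hk) ?orbT.
  rewrite -addn1 mulnDr in kN.
  lia.
Qed.

Lemma arith_ii_1 (k M n N cx cy cz lx ly lz al be g1 g2 t dx dy dz : nat) :
  3 <= k -> n = k*M + 1 -> 3*k+1 < n -> N <= 2*M - 2 ->
  n <= 1 + dx + (k*cx + lx) -> dx < 2 * k ->
  n <= 1 + dy + (k*cy + ly) -> dy < 2 * k ->
  n <= 1 + dz + (k*cz + lz) -> dz < 2 * k ->
  lx <= al + t -> ly <= be + t -> lz <= g1 + g2 + t -> al + g1 <= 1 -> be + g2 <= 1 ->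
  cx + cy + cz + t <= N -> False.
Proof.
move=> hk hn hn3 hN hx hdx hy hdy hz hdz hlx hly hlz h1 h2 hc.
have hM : 3 < M.
  apply: (@cancel_lt k); lia.
have kN : k * (cx + cy + cz + t) <= k * N by rewrite leq_mul2l hc orbT.
have kU : k * N <= k * (2*M - 2) by rewrite leq_mul2l hN orbT.
rewrite !mulnDr in kN.
rewrite mulnBr mulnA (mulnC k 2) -mulnA in kU.
have he : 3 * t <= k * t by rewrite leq_mul2r hk orbT.
have hM4 : k * 4 <= k * M by rewrite leq_mul2l hM orbT.
lia.
Qed.

Lemma arith_ii_2 (k q s n N cx cy cz lx ly lz al be g1 g2 t dx dy dz : nat) :
  3 <= k -> n = k*q + s + 2 -> 1 <= s -> s + 2 <= k -> 3*k+1 < n -> N <= 2*q - 1 ->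
  n <= 1 + dx + (k*cx + lx) -> dx < 2 * k ->
  n <= 1 + dy + (k*cy + ly) -> dy < 2 * k ->
  n <= 1 + dz + (k*cz + lz) -> dz < 2 * k ->
  lx <= al + t -> ly <= be + t -> lz <= g1 + g2 + t -> al + g1 <= 1 -> be + g2 <= 1 ->
  cx + cy + cz + t <= N -> False.
Proof.
move=> hk hn hs hsk hn3 hN hx hdx hy hdy hz hdz hlx hly hlz h1 h2 hc.
have hq : 2 < q.
  apply: (@cancel_lt k); lia.
case: (leqP t s) => hts.
- have cx1 : q - 2 < cx by apply: (@cancel_lt k); rewrite mulnBr; lia.
  have cy1 : q - 2 < cy by apply: (@cancel_lt k); rewrite mulnBr; lia.
  have cz1 : q - 2 <= cz.
    rewrite -(@leq_pmul2l k); last lia.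
    rewrite mulnBr; lia.
  case: t hlx hly hlz hc hts => [|t] hlx hly hlz hc hts.
  + have cz2 : q - 2 < cz by apply: (@cancel_lt k); rewrite mulnBr; lia.
    lia.
  + lia.
- have kN : k * (cx + cy + cz + t) <= k * N by rewrite leq_mul2l hc orbT.
  have kU : k * N <= k * (2*q - 1) by rewrite leq_mul2l hN orbT.
  rewrite !mulnDr in kN.
  rewrite mulnBr mulnA (mulnC k 2) -mulnA in kU.
  have [e he] : exists e, t = s.+1 + e by exists (t - s.+1); lia.
  subst t.
  have h3 : 3 * e <= k * e by rewrite leq_mul2r hk orbT.
  have h4 : k * 3 <= k * q by rewrite leq_mul2l hq orbT.
  have h5 : k * 1 <= k * s by rewrite leq_mul2l hs orbT.
  rewrite !mulnDr in kN.
  lia.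
Qed.

Lemma adm_false k q n : 3 <= k -> n = k*q + 2 -> 'C(n, 2) %% k = 0 -> False.
Proof.
move=> hk hn hC.
have h2 : 'C(n,2).*2 = n * n.-1.
  rewrite bin2 even_halfK // oddM; case: n {hn hC} => [|m] //=.
  by case: (odd m).
have hd : k %| n * n.-1 by rewrite -h2 -mul2n dvdn_mull //; apply/eqP.
have he : n * n.-1 = k * (q * (k * q + 3)) + 2 by rewrite hn; nia.
rewrite he dvdn_addr ?dvdn_mulr // in hd.
have := dvdn_leq _ hd; lia.
Qed.

Lemma ubound_cases k n : 3 <= k -> 3*k+1 < n -> k_admissible n k ->
 (n %% k = 1 %% k /\ exists M, n = k*M+1 /\ u_bound n k = 2*M - 2) \/
 (n %% k <> 1 %% k /\ exists q s, [/\ n = k*q + s + 2, 1 <= s, s+2 <= k & u_bound n k = 2*q - 1]).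
Proof.
move=> hk hn hadm; rewrite /u_bound.
have h1 : 1 %% k = 1 by rewrite modn_small //; lia.
case: eqP => h.
- left; split => //; exists (n %/ k).
  have hn' : n = k * (n %/ k) + 1 by rewrite {1}(divn_eq n k) h h1 mulnC.
  split => //.
  have -> : 2 * (n - 1) = (2 * (n %/ k)) * k by rewrite {1}hn'; lia.
  by rewrite mulnK //; lia.
- right; split => //; exists ((n-2) %/ k), ((n-2) %% k).
  have hd := divn_eq (n-2) k.
  have hs : (n-2) %% k < k by rewrite ltn_pmod //; lia.
  have hs0 : (n-2) %% k <> 0.
    move=> h0; apply: (@adm_false k ((n-2) %/ k) n) => //; lia.
  have hs1 : (n-2) %% k <> k.-1.
    move=> h0; apply: h.
    have -> : n = ((n-2) %/ k).+1 * k + 1 by lia.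
    by rewrite modnMDl.
  split; lia.
Qed.

Section Comb.
Variable T : finType.
Implicit Types (A : {set T * {set T}}) (v w x y : T).

Definition cen A v := [set s in A | s.1 == v].
Definition lf A v := [set s in A | v \in s.2].
Definition cl A c v := [set s in A | (s.1 == c) && (v \in s.2)].

Lemma set2_eq (a b c d : T) : [set a; b] = [set c; d] ->
  (a = c /\ b = d) \/ (a = d /\ b = c).
Proof.
move=> h.
have ha : a \in [set c; d] by rewrite -h set21.
have hb : b \in [set c; d] by rewrite -h set22.
have hc : c \in [set a; b] by rewrite h set21.
have hd : d \in [set a; b] by rewrite h set22.
move: ha hb hc hd; rewrite !inE => /orP[]/eqP ha /orP[]/eqP hb /orP[]/eqP hc /orP[]/eqP hd;
  subst; auto.
Qed.

Lemma covered_inv A v y : covered A v y ->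
  exists2 s, s \in A & ((s.1 = v /\ y \in s.2) \/ (s.1 = y /\ v \in s.2)).
Proof.
case/existsP => s /andP[sA /imsetP[x xs /set2_eq h]].
exists s => //; case: h => [[-> ->]|[-> ->]]; auto.
Qed.

Lemma covered_of A s x : s \in A -> x \in s.2 -> covered A s.1 x && covered A x s.1.
Proof.
move=> sA xs; apply/andP; split; apply/existsP; exists s; rewrite sA /=;
  apply/imsetP; exists x => //; by rewrite setUC.
Qed.

Lemma card_bigcup_le (I : finType) (P : {set I}) (F : I -> {set T}) :
  #|\bigcup_(i in P) F i| <= \sum_(i in P) #|F i|.
Proof.
elim/big_rec2: _ => [|i n U _ leUn]; first by rewrite cards0.
by rewrite (leq_trans (leq_card_setU (F i) U).1) ?leq_add2l.
Qed.

Lemma cov_bound k A : (forall s, s \in A -> is_kstar k s) -> forall v,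
  #|T| <= 1 + leftover_deg A v + (k * #|cen A v| + #|lf A v|).
Proof.
move=> hk v.
have sub : [set: T] \subset ([set v] :|: [set y | leftover_adj A v y]) :|:
   ((\bigcup_(s in cen A v) s.2) :|: [set s.1 | s in lf A v]).
  apply/subsetP => y _; rewrite !inE /leftover_adj.
  case: eqP => [->|/eqP hyv] //=.
  rewrite eq_sym hyv /=.
  case hc: (covered A v y) => //=.
  have [s sA [[h1 h2]|[h1 h2]]] := @covered_inv A v y hc.
  - apply/orP; left; apply/bigcupP; exists s => //; by rewrite inE sA h1 eqxx.
  - apply/orP; right; apply/imsetP; exists s => //; by rewrite inE sA h2.
have := subset_leq_card sub; rewrite cardsT => h.
apply: (leq_trans h); apply: (leq_trans (leq_card_setU _ _).1).
apply: leq_add.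
  apply: (leq_trans (leq_card_setU _ _).1); by rewrite cards1.
apply: (leq_trans (leq_card_setU _ _).1); apply: leq_add; last exact: leq_imset_card.
have HH := @card_bigcup_le _ (cen A v) (fun s => s.2). apply: leq_trans HH _.
rewrite (eq_bigr (fun _ => k)); first by rewrite sum_nat_const mulnC.
move=> s; rewrite inE => /andP[sA _]; by case: (hk s sA).
Qed.

Lemma card_disjU (X Y : {set T * {set T}}) :
  (forall s, s \in X -> s \in Y -> False) -> #|X :|: Y| = #|X| + #|Y|.
Proof.
move=> h; rewrite -cardsUI.
suff -> : X :&: Y = set0 by rewrite cards0 addn0.
apply/setP => s; rewrite !inE; apply/negbTE/negP => /andP[a b]; exact: h a b.
Qed.

Lemma pair_le1 k A : partial_star_design k A -> forall v w, v != w ->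
  #|cl A w v| + #|cl A v w| <= 1.
Proof.
move=> [hk hd] v w hvw.
rewrite -card_disjU; last first.
  move=> s; rewrite !inE => /andP[_ /andP[/eqP h1 _]] /andP[_ /andP[/eqP h2 _]].
  by move: hvw; rewrite -h1 -h2 eqxx.
apply/card_le1_eqP => s s' hs hs'.
have edge : forall t, t \in cl A w v :|: cl A v w -> (t \in A) && ([set v; w] \in star_edges t).
  move=> t; rewrite !inE => /orP[] /andP[tA /andP[/eqP h1 h2]]; rewrite tA /=;
   apply/imsetP; [exists v => //; by rewrite h1 setUC | exists w => //; by rewrite h1].
have /andP[sA e1] := edge _ hs; have /andP[sA' e2] := edge _ hs'.
apply/eqP; apply/negP => /negP hne.
by rewrite (disjointFr (hd _ _ sA' sA hne) e2) in e1.
Qed.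



Lemma lf_le1 A v w (R : {set T * {set T}}) :
  (forall s, s \in A -> v \in s.2 -> s.1 != w -> s \in R) ->
  #|lf A v| <= #|cl A w v| + #|R|.
Proof.
move=> h; apply: leq_trans (leq_card_setU _ _).1.
apply: subset_leq_card; apply/subsetP => s; rewrite !inE => /andP[sA vs].
case: (eqVneq s.1 w) => [e|ne]; first by rewrite sA vs.
by rewrite h ?orbT.
Qed.

Lemma lf_le2 A v w1 w2 (R : {set T * {set T}}) :
  (forall s, s \in A -> v \in s.2 -> s.1 != w1 -> s.1 != w2 -> s \in R) ->
  #|lf A v| <= #|cl A w1 v| + #|cl A w2 v| + #|R|.
Proof.
move=> h.
have sub : lf A v \subset (cl A w1 v :|: cl A w2 v) :|: R; last first.
  apply: leq_trans (subset_leq_card sub) _.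
  apply: leq_trans (leq_card_setU _ _).1 _.
  by rewrite leq_add2r (leq_card_setU _ _).1.
 apply/subsetP => s; rewrite !inE => /andP[sA vs].
case: (eqVneq s.1 w1) => [e|ne]; first by rewrite sA vs.
case: (eqVneq s.1 w2) => [e|ne2]; first by rewrite sA vs orbT.
by rewrite h ?orbT.
Qed.

Lemma cen_le2 A v w (R : {set T * {set T}}) : v != w ->
  (forall s, s \in R -> [/\ s \in A, s.1 != v & s.1 != w]) ->
  #|cen A v| + #|cen A w| + #|R| <= #|A|.
Proof.
move=> hvw h.
rewrite -card_disjU; last first.
  by move=> s; rewrite !inE => /andP[_ /eqP h1] /andP[_ /eqP h2]; move: hvw; rewrite -h1 -h2 eqxx.
rewrite -card_disjU; last first.
  move=> s; rewrite !inE => /orP[] /andP[_ /eqP h1] /h[_ h2 h3].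
  - by move: h2; rewrite h1 eqxx.
  - by move: h3; rewrite h1 eqxx.
apply: subset_leq_card; apply/subsetP => s; rewrite !inE => /orP[/orP[]|].
- by case/andP.
- by case/andP.
- by case/h.
Qed.

Lemma cen_le3 A x y z (R : {set T * {set T}}) : x != y -> z != x -> z != y ->
  (forall s, s \in R -> [/\ s \in A, s.1 != x, s.1 != y & s.1 != z]) ->
  #|cen A x| + #|cen A y| + #|cen A z| + #|R| <= #|A|.
Proof.
move=> hxy hzx hzy h.
rewrite -card_disjU; last first.
  by move=> s; rewrite !inE => /andP[_ /eqP h1] /andP[_ /eqP h2]; move: hxy; rewrite -h1 -h2 eqxx.
rewrite -card_disjU; last first.
  move=> s; rewrite !inE => /orP[] /andP[_ /eqP h1] /andP[_ /eqP h2].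
  - by move: hzx; rewrite -h1 -h2 eqxx.
  - by move: hzy; rewrite -h1 -h2 eqxx.
rewrite -card_disjU; last first.
  move=> s; rewrite !inE => /orP[/orP[]|] /andP[_ /eqP h1] /h[_ h2 h3 h4].
  - by move: h2; rewrite h1 eqxx.
  - by move: h3; rewrite h1 eqxx.
  - by move: h4; rewrite h1 eqxx.
apply: subset_leq_card; apply/subsetP => s; rewrite !inE => /orP[/orP[/orP[]|]|].
- by case/andP.
- by case/andP.
- by case/andP.
- by case/h.
Qed.

End Comb.
Unset Implicit Arguments.

Theorem lemma12 (T : finType) (k : nat) (A : {set T * {set T}}) :
  3 <= k -> 3 * k + 1 < #|T| -> k_admissible #|T| k ->
  partial_star_design k A -> ~ reducible k A ->
  #|A| <= u_bound #|T| k ->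
  (forall v w : T, leftover_deg A v <= k -> leftover_deg A w <= k -> v = w) /\
  (forall x y : T, leftover_adj A x y ->
     leftover_deg A x < 2 * k -> leftover_deg A y < 2 * k ->
     forall z : T, z != x -> z != y -> 2 * k <= leftover_deg A z).
Proof.
move=> hk hn hadm hpsd hnred hN.
have [hks hdisj] := hpsd.
have cb := cov_bound hks.
have hU := ubound_cases hk hn hadm.
split.
- move=> v w hdv hdw.
  case: (eqVneq v w) => // hvw; exfalso.
  set R := [set s in A | (s.1 != v) && (s.1 != w)].
  have hR : forall s, s \in R -> [/\ s \in A, s.1 != v & s.1 != w].
    by move=> s; rewrite inE => /andP[-> /andP[-> ->]].
  have hNc := cen_le2 hvw hR.
  have hlv : #|lf A v| <= #|cl A w v| + #|R|.
    apply: lf_le1 => s sA vs ne; rewrite inE sA ne andbT /=.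
    by apply/eqP => e; case: (hks s sA); rewrite e vs.
  have hlw : #|lf A w| <= #|cl A v w| + #|R|.
    apply: lf_le1 => s sA ws ne; rewrite inE sA ne /=.
    by apply/eqP => e; case: (hks s sA); rewrite e ws.
  have hab := pair_le1 hpsd hvw.
  have cv := cb v; have cw := cb w.
  case: hU => [[hmod [M [hnM hu]]]|[hmod [q [s [hnq hs1 hs2 hu]]]]].
  + rewrite hu in hN.
    have [ht0 hNU hcv hcw] := arith_i_1 hk hnM hn hN cv hdv cw hdw hlv hlw hab hNc.
    apply: hnred; split => //; split; first by rewrite hu.
    have hR0 : R = set0 by apply/eqP; rewrite -cards_eq0 ht0.
    case: (posnP #|cl A w v|) => ha.
    * exists v; split.
        have [s hs] := card_gt0P hcv; exists s; by move: hs; rewrite inE => /andP[? /eqP].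
      move=> s sA; apply/negP => vs.
      have : 0 < #|lf A v| by apply/card_gt0P; exists s; rewrite inE sA vs.
      lia.
    * exists w; split.
        have [s hs] := card_gt0P hcw; exists s; by move: hs; rewrite inE => /andP[? /eqP].
      move=> s sA; apply/negP => ws.
      have : 0 < #|lf A w| by apply/card_gt0P; exists s; rewrite inE sA ws.
      lia.
  + rewrite hu in hN.
    exact: (arith_i_2 hk hnq hs1 hs2 hn hN cv hdv cw hdw hlv hlw hab hNc).
- move=> x y /andP[hxy hncov] hdx hdy z hzx hzy.
  rewrite leqNgt; apply/negP => hdz.
  set R := [set s in A | [&& s.1 != x, s.1 != y & s.1 != z]].
  have hR : forall s, s \in R -> [/\ s \in A, s.1 != x, s.1 != y & s.1 != z].
    by move=> s; rewrite inE => /andP[-> /and3P[-> -> ->]].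
  have hNc := cen_le3 hxy hzx hzy hR.
  have hlx : #|lf A x| <= #|cl A z x| + #|R|.
    apply: lf_le1 => s sA xs ne; rewrite inE sA ne andbT /=.
    apply/andP; split.
      by apply/eqP => e; case: (hks s sA); rewrite e xs.
    apply/eqP => e; move: hncov; have := covered_of sA xs; rewrite e.
    by case/andP => _ ->.
  have hly : #|lf A y| <= #|cl A z y| + #|R|.
    apply: lf_le1 => s sA ys ne; rewrite inE sA ne andbT /=.
    apply/andP; split; last by apply/eqP => e; case: (hks s sA); rewrite e ys.
    apply/eqP => e; move: hncov; have := covered_of sA ys; rewrite e.
    by case/andP => ->.
  have hlz : #|lf A z| <= #|cl A x z| + #|cl A y z| + #|R|.
    apply: lf_le2 => s sA zs ne1 ne2; rewrite inE sA ne1 ne2 /=.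
    by apply/eqP => e; case: (hks s sA); rewrite e zs.
  have h1 := pair_le1 hpsd (hzx : z != x).
  have h2 := pair_le1 hpsd (hzy : z != y).
  have h1' : #|cl A z x| + #|cl A x z| <= 1 by rewrite addnC.
  have h2' : #|cl A z y| + #|cl A y z| <= 1 by rewrite addnC.
  have cx := cb x; have cy := cb y; have cz := cb z.
  case: hU => [[hmod [M [hnM hu]]]|[hmod [q [s [hnq hs1 hs2 hu]]]]]; rewrite hu in hN.
  + exact: (arith_ii_1 hk hnM hn hN cx hdx cy hdy cz hdz hlx hly hlz h1' h2' hNc).
  + exact: (arith_ii_2 hk hnq hs1 hs2 hn hN cx hdx cy hdy cz hdz hlx hly hlz h1' h2' hNc).
Qed.
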